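(* Suppose $R$ carries an $A$-grading and an $A'$-grading and $N$ carries a $B$-grading and a $B'$-grading (each pair satisfying the standing assumptions), and that the $(A,B)$-gradings refine the $(A',B')$-gradings. If $X=\{m_1,\dots,m_n\}\subseteq M$ is a Macaulay basis of $M$ with respect to the $(A,B)$-gradings and $X$ generates $M$, then $X$ is also a Macaulay basis of $M$ with respect to the $(A',B')$-gradings.
   Context: Standing assumptions on a grading pair $(A,B)$: $\mathbf{k}$ is a field; $(A,+,0)$ is a finitely generated cancellative commutative monoid with a well-ordered total order such that $0<a$ for $a\ne0$ and $a\le a'\Rightarrow a+c\le a'+c$; $R=\bigoplus_{a\in A}R_a$ is a commutative Noetherian $\mathbf{k}$-algebra with $R_aR_{a'}\subseteq R_{a+a'}$; $B$ is a well-ordered totally ordered set with an action $(a,b)\mapsto a\cdot b$ of $A$ with $0\cdot b=b$, $(a+a')\cdot b=a\cdot(a'\cdot b)$, monotone and cancellative in each argument; $N=\bigoplus_{b\in B}N_b$ is a Noetherian $R$-module with $R_aN_b\subseteq N_{a\cdot b}$; $M\subseteq N$ is an $R$-submodule. For $m=\sum_bm_b\ne0$: $\deg m=\max\{b:m_b\ne0\}$, $\operatorname{lf}(m)=m_{\deg m}$. A finite set $\{m_1,\dots,m_n\}$ of nonzero elements of $M$ is a Macaulay basis of $M$ (w.r.t. the given gradings) if the $R$-submodule generated by $\{\operatorname{lf}(p):0\ne p\in M\}$ equals that generated by $\operatorname{lf}(m_1),\dots,\operatorname{lf}(m_n)$. Refinement: the $(A,B)$-gradings refine the $(A',B')$-gradings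 if there is an order-preserving monoid homomorphism $f:A\to A'$ with $R_{a'}=\bigoplus_{a\in f^{-1}(a')}R_a$ for all $a'\in A'$, and an order-preserving map $g:B\to B'$ with $N_{b'}=\bigoplus_{b\in g^{-1}(b')}N_b$ for all $b'\in B'$ and $f(a)\cdot g(b)=g(a\cdot b)$ for all $a\in A$, $b\in B$. *)

(* Defs.v *)
From mathcomp Require Import all_boot all_order all_algebra.
From Stdlib Require List.
Set Implicit Arguments. Unset Strict Implicit. Unset Printing Implicit Defensive.
Import GRing.Theory.
Local Open Scope ring_scope.

Record ordered_monoid (A : Type) (add : A -> A -> A) (z : A)
    (le : A -> A -> Prop) : Prop := {
  om_assoc : forall a b c, add a (add b c) = add (add a b) c;
  om_comm : forall a b, add a b = add b a;
  om_zero : forall a, add z a = a;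
  om_cancel : forall a b c, add a c = add b c -> a = b;
  om_fingen : exists gens : seq A, forall a, exists l : seq A,
      (forall g, List.In g l -> List.In g gens) /\ a = foldr add z l;
  om_refl : forall a, le a a;
  om_antisym : forall a b, le a b -> le b a -> a = b;
  om_trans : forall a b c, le a b -> le b c -> le a c;
  om_total : forall a b, le a b \/ le b a;
  om_wf : forall S : A -> Prop, (exists a, S a) ->
      exists m, S m /\ forall a, S a -> le m a;
  om_pos : forall a, a <> z -> le z a /\ z <> a;
  om_compat : forall a a' c, le a a' -> le (add a c) (add a' c)
}.

Record ordered_action (A : Type) (add : A -> A -> A) (z : A)
    (leA : A -> A -> Prop) (B : Type) (leB : B -> B -> Prop)
    (act : A -> B -> B) : Prop := {
  oa_refl : forall b, leB b b;
  oa_antisym : forall b c, leB b c -> leB c b -> b = c;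
  oa_trans : forall b c d, leB b c -> leB c d -> leB b d;
  oa_total : forall b c, leB b c \/ leB c b;
  oa_wf : forall S : B -> Prop, (exists b, S b) ->
      exists m, S m /\ forall b, S b -> leB m b;
  oa_zero : forall b, act z b = b;
  oa_add : forall a a' b, act (add a a') b = act a (act a' b);
  oa_mono_l : forall a a' b, leA a a' -> leB (act a b) (act a' b);
  oa_mono_r : forall a b b', leB b b' -> leB (act a b) (act a b');
  oa_cancel_l : forall a a' b, act a b = act a' b -> a = a';
  oa_cancel_r : forall a b b', act a b = act a b' -> b = b'
}.

Definition internal_dsum (V : zmodType) (I : Type) (P : I -> Prop)
    (Vi : I -> V -> Prop) (W : V -> Prop) : Prop :=
  (forall v, W v <-> exists (s : seq I) (c : I -> V), List.NoDup s /\
       (forall i, List.In i s -> P i /\ Vi i (c i)) /\ v = \sum_(i <- s) c i) /\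
  (forall (s : seq I) (c : I -> V), List.NoDup s ->
       (forall i, List.In i s -> P i /\ Vi i (c i)) ->
       \sum_(i <- s) c i = 0 -> forall i, List.In i s -> c i = 0).

Definition ksubspace_alg (k : fieldType) (R : comAlgType k) (S : R -> Prop) :=
  S 0 /\ (forall x y, S x -> S y -> S (x + y)) /\
  (forall (c : k) x, S x -> S (c *: x)).

Definition ksubspace_mod (k : fieldType) (R : comAlgType k) (N : lmodType R)
    (S : N -> Prop) :=
  S 0 /\ (forall x y, S x -> S y -> S (x + y)) /\
  (forall (c : k) x, S x -> S ((c%:A : R) *: x)).

Definition submodule (R : comRingType) (N : lmodType R) (S : N -> Prop) :=
  S 0 /\ (forall x y, S x -> S y -> S (x + y)) /\
  (forall (r : R) x, S x -> S (r *: x)).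

Definition span (R : comRingType) (N : lmodType R) (S : N -> Prop) (y : N) :=
  exists l : seq (R * N), (forall p, List.In p l -> S p.2) /\
    y = \sum_(p <- l) p.1 *: p.2.

Definition is_ideal (R : comRingType) (I : R -> Prop) :=
  I 0 /\ (forall x y, I x -> I y -> I (x + y)) /\
  (forall r x, I x -> I (r * x)).

Definition noetherian_ring (R : comRingType) :=
  forall I : R -> Prop, is_ideal I -> exists s : seq R, forall x,
    I x <-> exists l : seq (R * R), (forall p, List.In p l -> List.In p.2 s) /\
            x = \sum_(p <- l) p.1 * p.2.

Definition noetherian_module (R : comRingType) (N : lmodType R) :=
  forall S : N -> Prop, submodule S -> exists s : seq N, forall x,
    S x <-> span (fun y => List.In y s) x.

Record ring_grading (k : fieldType) (R : comAlgType k) (A : Type)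
    (add : A -> A -> A) (RA : A -> R -> Prop) : Prop := {
  rg_sub : forall a, ksubspace_alg (RA a);
  rg_mul : forall a a' x y, RA a x -> RA a' y -> RA (add a a') (x * y);
  rg_dsum : internal_dsum (fun _ => True) RA (fun _ => True)
}.

Record module_grading (k : fieldType) (R : comAlgType k) (N : lmodType R)
    (A : Type) (RA : A -> R -> Prop) (B : Type) (act : A -> B -> B)
    (NB : B -> N -> Prop) : Prop := {
  mg_sub : forall b, ksubspace_mod (NB b);
  mg_mul : forall a b r x, RA a r -> NB b x -> NB (act a b) (r *: x);
  mg_dsum : internal_dsum (fun _ => True) NB (fun _ => True)
}.

(* the standing assumptions on a grading pair (A,B) (other than Noetherianity
   of R and N and M being a submodule, which do not depend on the grading) *)
Record grading_pair (k : fieldType) (R : comAlgType k) (N : lmodType R)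
    (A : Type) (add : A -> A -> A) (z : A) (leA : A -> A -> Prop)
    (B : Type) (leB : B -> B -> Prop) (act : A -> B -> B)
    (RA : A -> R -> Prop) (NB : B -> N -> Prop) : Prop := {
  gp_monoid : ordered_monoid add z leA;
  gp_action : ordered_action add z leA leB act;
  gp_ring : ring_grading add RA;
  gp_mod : module_grading RA act NB
}.

Record refines (k : fieldType) (R : comAlgType k) (N : lmodType R)
    (A : Type) (add : A -> A -> A) (z : A) (leA : A -> A -> Prop)
    (B : Type) (leB : B -> B -> Prop) (act : A -> B -> B)
    (RA : A -> R -> Prop) (NB : B -> N -> Prop)
    (A' : Type) (add' : A' -> A' -> A') (z' : A') (leA' : A' -> A' -> Prop)
    (B' : Type) (leB' : B' -> B' -> Prop) (act' : A' -> B' -> B')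
    (RA' : A' -> R -> Prop) (NB' : B' -> N -> Prop)
    (f : A -> A') (g : B -> B') : Prop := {
  rf_zero : f z = z';
  rf_add : forall a b, f (add a b) = add' (f a) (f b);
  rf_mono : forall a b, leA a b -> leA' (f a) (f b);
  rf_ring : forall a', internal_dsum (fun a => f a = a') RA (RA' a');
  rg_mono : forall b c, leB b c -> leB' (g b) (g c);
  rg_mod : forall b', internal_dsum (fun b => g b = b') NB (NB' b');
  rg_act : forall a b, act' (f a) (g b) = g (act a b)
}.

Definition leading_form (R : comRingType) (N : lmodType R) (B : Type)
    (leB : B -> B -> Prop) (NB : B -> N -> Prop) (m f : N) : Prop :=
  exists (s : seq B) (c : B -> N) (d : B), List.NoDup s /\
    (forall b, List.In b s -> NB b (c b)) /\ m = \sum_(b <- s) c b /\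
    List.In d s /\ c d <> 0 /\ f = c d /\
    (forall b, List.In b s -> c b <> 0 -> leB b d).

Definition macaulay_basis (R : comRingType) (N : lmodType R) (B : Type)
    (leB : B -> B -> Prop) (NB : B -> N -> Prop) (M : N -> Prop)
    (X : seq N) : Prop :=
  (forall x, List.In x X -> M x /\ x <> 0) /\
  (forall y,
     span (fun u => exists p, M p /\ p <> 0 /\ leading_form leB NB p u) y <->
     span (fun u => exists x, List.In x X /\ leading_form leB NB x u) y).

Definition generates (R : comRingType) (N : lmodType R) (X : seq N)
    (M : N -> Prop) : Prop :=
  forall y, M y <-> span (fun u => List.In u X) y.

(* Main.v *)
From Pilot Require Import Defs.
From mathcomp Require Import all_boot all_order all_algebra.
From mathcomp Require Import boolp.
From Stdlib Require List.
From Stdlib Require Import Classical.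
Import Pilot.Defs.
Set Implicit Arguments. Unset Strict Implicit. Unset Printing Implicit Defensive.
Import GRing.Theory.
Local Open Scope ring_scope.

Lemma InE (T : eqType) (x : T) s : List.In x s <-> x \in s.
Proof.
elim: s => [|y s IH] //=; rewrite in_cons; split.
- by case=> [->|/IH ->]; rewrite ?eqxx ?orbT.
- by case/orP=> [/eqP->|/IH]; [left|right].
Qed.

Lemma NoDupE (T : eqType) (s : seq T) : List.NoDup s <-> uniq s.
Proof.
elim: s => [|y s IH] /=; first by split => // _; constructor.
split.
- move=> H; inversion H; subst; apply/andP; split; last by apply/IH.
  by apply/negP => /InE.
- case/andP=> Hy Hs; constructor; last by apply/IH.
  by move/InE; apply/negP.
Qed.

Lemma eq_big_In (V : zmodType) (J : Type) (s : seq J) (P : pred J) (F G : J -> V) :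
  (forall j, List.In j s -> P j -> F j = G j) ->
  \sum_(j <- s | P j) F j = \sum_(j <- s | P j) G j.
Proof.
elim: s => [|j s IH] H; first by rewrite !big_nil.
rewrite !big_cons; case: ifP => Pj.
  rewrite H /=; [|by left|by []].
  by rewrite IH // => j' Hj; apply: H; right.
by rewrite IH // => j' Hj; apply: H; right.
Qed.

Lemma big_pred1_seq (V : zmodType) (I : eqType) (t : seq I) (x : I) (F : I -> V) :
  uniq t -> \sum_(i <- t | x == i) F i = if x \in t then F x else 0.
Proof.
elim: t => [|y t IH] /=; first by rewrite big_nil.
case/andP=> Hy Ht; rewrite big_cons in_cons IH //.
have [->|ne] := eqVneq x y; first by rewrite (negbTE Hy) addr0.
by [].
Qed.

Lemma sum_ext_zero (V : zmodType) (I : eqType) (u s : seq I) (F : I -> V) :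
  uniq u -> uniq s -> {subset s <= u} ->
  \sum_(i <- u) (if i \in s then F i else 0) = \sum_(i <- s) F i.
Proof.
move=> Uu Us Ssu; rewrite -big_mkcond -big_filter; apply: perm_big.
apply: uniq_perm; first by rewrite filter_uniq.
  by [].
by move=> i; rewrite mem_filter; case Hi: (i \in s) => //=; rewrite Ssu.
Qed.

Section Graded.
Variables (R : comRingType) (N : lmodType R) (I : choiceType) (Vi : I -> N -> Prop).
Hypothesis H0 : forall i, Vi i 0.
Hypothesis HD : forall i x y, Vi i x -> Vi i y -> Vi i (x + y).
Hypothesis HN : forall i x, Vi i x -> Vi i (- x).
Hypothesis Hex : forall v, exists (s : seq I) (c : I -> N), uniq s /\
  (forall i, i \in s -> Vi i (c i)) /\ v = \sum_(i <- s) c i.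
Hypothesis Huniq : forall (s : seq I) (c : I -> N), uniq s ->
  (forall i, i \in s -> Vi i (c i)) -> \sum_(i <- s) c i = 0 ->
  forall i, i \in s -> c i = 0.

Definition sv v : seq I := proj1_sig (cid (Hex v)).
Definition sv_spec v := proj2_sig (cid (Hex v)).
Definition cv v : I -> N := proj1_sig (cid (sv_spec v)).
Definition cv_spec v := proj2_sig (cid (sv_spec v)).
Definition pr (i : I) (v : N) : N := if i \in sv v then cv v i else 0.

Lemma sv_uniq v : uniq (sv v).
Proof. by case: (cv_spec v). Qed.

Lemma pr_out v i : i \notin sv v -> pr i v = 0.
Proof. by rewrite /pr => /negbTE ->. Qed.

Lemma pr_in i v : Vi i (pr i v).
Proof.
rewrite /pr; case: ifP => // Hi; by case: (cv_spec v) => _ [H _]; apply: H.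
Qed.

Lemma pr_sum v : v = \sum_(i <- sv v) pr i v.
Proof.
case: (cv_spec v) => _ [_ Hv]; rewrite {1}Hv big_seq_cond [RHS]big_seq_cond.
by apply: eq_bigr => i /andP[Hi _]; rewrite /pr Hi.
Qed.

Lemma sum_closed i (J : Type) (s : seq J) (P : pred J) (F : J -> N) :
  (forall j, List.In j s -> P j -> Vi i (F j)) -> Vi i (\sum_(j <- s | P j) F j).
Proof.
elim: s => [|j s IH] H; first by rewrite big_nil.
rewrite big_cons; case: ifP => Pj.
  by apply: HD; [apply: H => //; left | apply: IH => j' Hj; apply: H; right].
by apply: IH => j' Hj; apply: H; right.
Qed.

Lemma G3 (s : seq I) (c : I -> N) v : uniq s -> (forall i, i \in s -> Vi i (c i)) ->
  v = \sum_(i <- s) c i -> forall j, pr j v = if j \in s then c j else 0.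
Proof.
move=> Us Hc Hv j.
set u := undup (s ++ sv v).
have Uu : uniq u by apply: undup_uniq.
pose d i := (if i \in s then c i else 0) - pr i v.
have Hd : forall i, i \in u -> Vi i (d i).
  move=> i _; apply: HD; last by apply: HN; apply: pr_in.
  by case: ifP => Hi; [apply: Hc|apply: H0].
have Sd : \sum_(i <- u) d i = 0.
  rewrite big_split /= sumrN sum_ext_zero //; last first.
    by move=> i Hi; rewrite mem_undup mem_cat Hi.
  rewrite -Hv.
  have -> : \sum_(i <- u) pr i v = \sum_(i <- u) (if i \in sv v then pr i v else 0).
    by apply: eq_bigr => i _; case: ifP => // /negbT /pr_out.
  rewrite sum_ext_zero ?sv_uniq -?pr_sum ?subrr //.
  by move=> i Hi; rewrite mem_undup mem_cat Hi orbT.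
case Hj: (j \in u).
  by move: (Huniq Uu Hd Sd Hj); rewrite /d => /eqP; rewrite subr_eq0 => /eqP <-.
move/negbT: Hj; rewrite mem_undup mem_cat negb_or => /andP [/negbTE -> H2].
by rewrite pr_out.
Qed.

Lemma sum_none (J : Type) (s : seq J) (P : pred J) (F : J -> N) :
  (forall j, List.In j s -> ~~ P j) -> \sum_(j <- s | P j) F j = 0.
Proof.
elim: s => [|j s IH] H; first by rewrite big_nil.
rewrite big_cons (negbTE (H j _)); last by left.
by apply: IH => j' Hj; apply: H; right.
Qed.

Lemma In_map (J : Type) (T : eqType) (e : J -> T) s j : List.In j s -> e j \in map e s.
Proof.
elim: s => [|j' s IH] //= [->|H]; first by rewrite in_cons eqxx.
by rewrite in_cons IH ?orbT.
Qed.

Lemma G3' (J : Type) (s : seq J) (e : J -> I) (c : J -> N) :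
  (forall j, List.In j s -> Vi (e j) (c j)) ->
  forall i, pr i (\sum_(j <- s) c j) = \sum_(j <- s | e j == i) c j.
Proof.
move=> Hc i.
set t := undup (map e s).
pose d i := \sum_(j <- s | e j == i) c j.
have Hsum : \sum_(j <- s) c j = \sum_(i <- t) d i.
  rewrite /d /=; under [RHS]eq_bigr do rewrite big_mkcond.
  rewrite exchange_big /=; apply: eq_big_In => j Hj _; rewrite -big_mkcond /=.
  by rewrite big_pred1_seq ?undup_uniq // mem_undup In_map.
rewrite (G3 (c := d) (undup_uniq _) _ Hsum).
  case: ifP => // /negbT Hi; rewrite /d sum_none // => j Hj.
  by apply/negP => /eqP Hei; move: Hi; rewrite mem_undup -Hei In_map.
move=> i' _; rewrite /d; apply: sum_closed => j Hj /eqP <-; exact: Hc.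
Qed.

Lemma pr_hom i0 x i : Vi i0 x -> pr i x = if i0 == i then x else 0.
Proof.
move=> Hx.
have := @G3' unit [:: tt] (fun _ => i0) (fun _ => x) (fun _ _ => Hx) i.
by rewrite !big_seq1 big_mkcond big_seq1.
Qed.

Lemma pr0 i : pr i 0 = 0.
Proof. by rewrite (pr_hom i (H0 i)); case: ifP. Qed.

Lemma pr_self i v : pr i v = \sum_(i' <- sv v | i' == i) pr i' v.
Proof.
have := @G3' I (sv v) id (fun i => pr i v) (fun j _ => pr_in j v) i.
by rewrite -pr_sum.
Qed.

Lemma prD i v w : pr i (v + w) = pr i v + pr i w.
Proof.
have E : v + w = \sum_(j <- map (pair v) (sv v) ++ map (pair w) (sv w)) pr j.2 j.1.
  by rewrite big_cat !big_map /= -!pr_sum.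
rewrite E (@G3' (N * I) _ snd (fun j => pr j.2 j.1)).
  by rewrite big_cat !big_map /= -!pr_self.
by move=> j _; apply: pr_in.
Qed.

Lemma pr_sumL i (J : Type) (s : seq J) (P : pred J) (F : J -> N) :
  pr i (\sum_(j <- s | P j) F j) = \sum_(j <- s | P j) pr i (F j).
Proof. by apply: (big_morph (pr i)); [apply: prD|apply: pr0]. Qed.

Lemma prN i v : pr i (- v) = - pr i v.
Proof. by have := prD i (- v) v; rewrite addNr pr0 => /eqP; rewrite eq_sym addr_eq0 => /eqP. Qed.

Lemma prSub i v w : pr i (v - w) = pr i v - pr i w.
Proof. by rewrite prD prN. Qed.

Lemma pr_eq0 v : (forall i, pr i v = 0) -> v = 0.
Proof. by move=> H; rewrite (pr_sum v) big1 // => i _; rewrite H. Qed.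

Lemma prpr i j v : pr j (pr i v) = if i == j then pr i v else 0.
Proof. exact: pr_hom (pr_in i v). Qed.

Lemma pr_nz_in v i : pr i v != 0 -> i \in sv v.
Proof. by apply: contraR => /pr_out ->. Qed.

Variable le : I -> I -> Prop.
Hypothesis le_refl : forall b, le b b.
Hypothesis le_anti : forall b c, le b c -> le c b -> b = c.
Hypothesis le_trans : forall b c d, le b c -> le c d -> le b d.
Hypothesis le_total : forall b c, le b c \/ le c b.

Definition isdeg v d := pr d v <> 0 /\ forall b, pr b v <> 0 -> le b d.

Lemma max_list (t : seq I) : t <> [::] -> exists d, d \in t /\ forall b, b \in t -> le b d.
Proof.
elim: t => [|y t IH] // _; case: t IH => [|z t] IH.
  exists y; split; first by rewrite mem_seq1.
  by move=> b; rewrite mem_seq1 => /eqP ->.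
have [d [Hd Hmax]] := IH ltac:(by []).
case: (le_total d y) => Hdy.
  exists y; split; first by rewrite in_cons eqxx.
  move=> b; rewrite in_cons => /orP [/eqP ->//|Hb].
  by apply: le_trans (Hmax b Hb) Hdy.
exists d; split; first by rewrite in_cons Hd orbT.
by move=> b; rewrite in_cons => /orP [/eqP ->//|Hb]; apply: Hmax.
Qed.

Lemma DEG v : v <> 0 -> exists d, isdeg v d.
Proof.
move=> Hv; set t := [seq i <- sv v | pr i v != 0].
have [Ht|Ht] := eqVneq t [::].
  exfalso; apply: Hv; apply: pr_eq0 => i; apply/eqP; apply: contraT => Hi.
  have : i \in t by rewrite mem_filter Hi pr_nz_in.
  by rewrite Ht.
have [d [Hd Hmax]] := max_list (t := t) (fun E => (negP Ht) (introT eqP E)).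
exists d; split; first by move: Hd; rewrite mem_filter => /andP [/eqP ? _].
move=> b /eqP Hb; apply: Hmax; by rewrite mem_filter Hb pr_nz_in.
Qed.

Lemma isdeg_uniq v d d' : isdeg v d -> isdeg v d' -> d = d'.
Proof. by move=> [H1 H2] [H3 H4]; apply: le_anti; [apply: H4|apply: H2]. Qed.

Lemma LF v u : leading_form le Vi v u <-> exists d, isdeg v d /\ u = pr d v.
Proof.
split.
- move=> [s [c [d [Hs [Hc [Hv [Hd [Hcd [Hu Hmax]]]]]]]]].
  move/NoDupE: Hs => Us.
  have E := G3 Us (fun i Hi => Hc i (proj2 (InE _ _) Hi)) Hv.
  have Hd' : d \in s by apply/InE.
  exists d; split; last by rewrite E Hd'.
  split; first by rewrite E Hd'.
  move=> b; rewrite E; case: ifP => // Hb Hcb.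
  by apply: Hmax => //; apply/InE.
- move=> [d [[Hd Hmax] ->]].
  exists (sv v), (pr^~ v), d; split; first by apply/NoDupE; apply: sv_uniq.
  split; first by move=> b _; apply: pr_in.
  split; first by apply: pr_sum.
  split; first by apply/InE; apply: pr_nz_in; apply/eqP.
  by do 2 (split => //); move=> b _; apply: Hmax.
Qed.

Variables (A : Type) (RA : A -> R -> Prop) (act : A -> I -> I).
Hypothesis Hmul : forall a b r x, RA a r -> Vi b x -> Vi (act a b) (r *: x).
Hypothesis act_mono : forall a b b', le b b' -> le (act a b) (act a b').
Hypothesis act_cancel : forall a b b', act a b = act a b' -> b = b'.

Lemma SCAL a h v b : RA a h ->
  pr b (h *: v) = \sum_(b0 <- sv v | act a b0 == b) h *: pr b0 v.
Proof.
move=> Hh; rewrite {1}(pr_sum v) scaler_sumr.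
by apply: (@G3' I _ (act a) (fun b0 => h *: pr b0 v)) => j _; apply: Hmul => //; apply: pr_in.
Qed.

Lemma SCALbound a h x dx b : RA a h -> isdeg x dx -> pr b (h *: x) <> 0 -> le b (act a dx).
Proof.
move=> Hh [Hdx Hmax]; rewrite (SCAL _ _ Hh) => Hne.
apply: NNPP => Hnle; apply: Hne; apply: big1 => b0 /eqP Hb0.
apply: NNPP => Hz; apply: Hnle; rewrite -Hb0; apply: act_mono; apply: Hmax.
by move=> E; apply: Hz; rewrite E scaler0.
Qed.

Lemma SCALformal a h x dx D : RA a h -> isdeg x dx -> le (act a dx) D ->
  pr D (h *: x) = if act a dx == D then h *: pr dx x else 0.
Proof.
move=> Hh [Hdx Hmax] HD'; rewrite (SCAL _ _ Hh).
case: eqP => [<-|Hne].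
  rewrite (eq_bigl (fun b0 => dx == b0)); last first.
    move=> b0 /=; apply/eqP/eqP => [/act_cancel ->//|->//].
  by rewrite big_pred1_seq ?sv_uniq // pr_nz_in //; apply/eqP.
apply: big1 => b0 /eqP Hb0; apply: NNPP => Hz; apply: Hne.
have Hb0dx : le b0 dx by apply: Hmax => E; apply: Hz; rewrite E scaler0.
by rewrite -Hb0; apply: le_anti; [rewrite Hb0|apply: act_mono].
Qed.

End Graded.

Lemma In_cat (T : Type) (x : T) s1 s2 : List.In x (s1 ++ s2) <-> List.In x s1 \/ List.In x s2.
Proof.
elim: s1 => [|y s1 IH] /=; first by split; [right|case].
split; first by case=> [->|/IH [H|H]]; [left;left|left;right|right].
by case=> [[->|H]|H]; [left|right; apply/IH; left|right; apply/IH; right].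
Qed.

Lemma In_mapE (T U : Type) (h : T -> U) y s : List.In y (map h s) -> exists x, y = h x /\ List.In x s.
Proof.
elim: s => [|x s IH] //= [<-|/IH [z [-> Hz]]]; first by exists x; split => //; left.
by exists z; split => //; right.
Qed.

Lemma In_filter (T : Type) (P : pred T) x s : List.In x (filter P s) <-> List.In x s /\ P x.
Proof.
elim: s => [|y s IH] /=; first by split => // [[]].
case: ifP => Py /=; split.
- by case=> [<-|/IH [H1 H2]]; split => //; [left|right].
- by case=> [[->|H] Px]; [left|right; apply/IH].
- by move/IH=> [H1 H2]; split => //; right.
- by case=> [[E|H] Px]; [rewrite -E Py in Px|apply/IH].
Qed.

Lemma Hex_of (R : comRingType) (N : lmodType R) (T : choiceType) (Vi : T -> N -> Prop) :
  internal_dsum (fun _ : T => True) Vi (fun _ => True) ->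
  forall v, exists (s : seq T) (c : T -> N), uniq s /\
  (forall i, i \in s -> Vi i (c i)) /\ v = \sum_(i <- s) c i.
Proof.
move=> [H _] v; have [s [c [Hs [Hc Hv]]]] := proj1 (H v) Logic.I.
exists s, c; split; first by apply/NoDupE.
by split=> // i /InE Hi; exact: (proj2 (Hc i Hi)).
Qed.

Lemma Huniq_of (R : comRingType) (N : lmodType R) (T : choiceType) (Vi : T -> N -> Prop) :
  internal_dsum (fun _ : T => True) Vi (fun _ => True) ->
  forall (s : seq T) (c : T -> N), uniq s ->
  (forall i, i \in s -> Vi i (c i)) -> \sum_(i <- s) c i = 0 ->
  forall i, i \in s -> c i = 0.
Proof.
move=> [_ H] s c Us Hc Hs i Hi; apply: (H s c (proj2 (NoDupE s) Us)) => //.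
  by move=> j /InE Hj; split => //; exact: Hc.
by apply/InE.
Qed.

Lemma ksub_neg (k : fieldType) (R : comAlgType k) (N : lmodType R) (S : N -> Prop) :
  ksubspace_mod S -> forall x, S x -> S (- x).
Proof.
move=> [_ [_ H]] x Hx; have := H (-1) x Hx.
by rewrite scaleNr scale1r scaleN1r.
Qed.

Section Span.
Variables (R : comRingType) (N : lmodType R).

Lemma span_in (T : N -> Prop) u : T u -> span T u.
Proof.
move=> Hu; exists [:: (1, u)]; split; last by rewrite big_seq1 scale1r.
by move=> p [<-|[]].
Qed.

Lemma span0 (T : N -> Prop) : span T 0.
Proof. by exists [::]; split => //; rewrite big_nil. Qed.

Lemma span_add (T : N -> Prop) y1 y2 : span T y1 -> span T y2 -> span T (y1 + y2).
Proof.
move=> [l1 [H1 ->]] [l2 [H2 ->]]; exists (l1 ++ l2); split; last by rewrite big_cat.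
by move=> p /In_cat [H|H]; [apply: H1|apply: H2].
Qed.

Lemma span_scale (T : N -> Prop) r y : span T y -> span T (r *: y).
Proof.
move=> [l [H ->]]; exists (map (fun p => (r * p.1, p.2)) l); split.
  by move=> p Hp; have [q [E Hq]] := In_mapE Hp; rewrite E /=; apply: H.
by rewrite big_map scaler_sumr; apply: eq_bigr => p _; rewrite scalerA.
Qed.

Lemma span_trans (S T : N -> Prop) y : (forall u, S u -> span T u) -> span S y -> span T y.
Proof.
move=> HST [l [Hl ->]]; elim: l Hl => [|p l IH] Hl; first by rewrite big_nil; apply: span0.
rewrite big_cons; apply: span_add; first by apply: span_scale; apply: HST; apply: Hl; left.
by apply: IH => q Hq; apply: Hl; right.
Qed.
End Span.

Section Main.
Variables (k : fieldType) (R : comAlgType k) (N : lmodType R)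
    (A : Type) (addA : A -> A -> A) (zA : A) (leA : A -> A -> Prop)
    (B : Type) (leB : B -> B -> Prop) (actB : A -> B -> B)
    (RA : A -> R -> Prop) (NB : B -> N -> Prop)
    (A' : Type) (addA' : A' -> A' -> A') (zA' : A') (leA' : A' -> A' -> Prop)
    (B' : Type) (leB' : B' -> B' -> Prop) (actB' : A' -> B' -> B')
    (RA' : A' -> R -> Prop) (NB' : B' -> N -> Prop)
    (M : N -> Prop) (X : seq N) (f : A -> A') (g : B -> B').
Hypothesis HM : submodule M.
Hypothesis GP : grading_pair addA zA leA leB actB RA NB.
Hypothesis GP' : grading_pair addA' zA' leA' leB' actB' RA' NB'.
Hypothesis RF : refines addA zA leA leB actB RA NB addA' zA' leA' leB' actB' RA' NB' f g.
Hypothesis HX1 : forall x, List.In x X -> M x /\ x <> 0.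
Hypothesis HX2 : forall y,
  span (fun u => exists p, M p /\ p <> 0 /\ leading_form leB NB p u) y <->
  span (fun u => exists x, List.In x X /\ leading_form leB NB x u) y.

Notation cB := {classic B}.
Notation cB' := {classic B'}.

Lemma NB0 (b : cB) : NB b 0. Proof. by case: (mg_sub (gp_mod GP) b). Qed.
Lemma NBD (b : cB) x y : NB b x -> NB b y -> NB b (x + y).
Proof. by case: (mg_sub (gp_mod GP) b) => _ [H _]; apply: H. Qed.
Lemma NBN (b : cB) x : NB b x -> NB b (- x).
Proof. exact: ksub_neg (mg_sub (gp_mod GP) b) x. Qed.
Lemma NB0' (b : cB') : NB' b 0. Proof. by case: (mg_sub (gp_mod GP') b). Qed.
Lemma NBD' (b : cB') x y : NB' b x -> NB' b y -> NB' b (x + y).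
Proof. by case: (mg_sub (gp_mod GP') b) => _ [H _]; apply: H. Qed.
Lemma NBN' (b : cB') x : NB' b x -> NB' b (- x).
Proof. exact: ksub_neg (mg_sub (gp_mod GP') b) x. Qed.

Definition HexB := @Hex_of R N cB NB (mg_dsum (gp_mod GP)).
Definition HunB := @Huniq_of R N cB NB (mg_dsum (gp_mod GP)).
Definition HexB' := @Hex_of R N cB' NB' (mg_dsum (gp_mod GP')).
Definition HunB' := @Huniq_of R N cB' NB' (mg_dsum (gp_mod GP')).

Notation prB := (pr HexB).
Notation prB' := (pr HexB').
Notation isdegB := (isdeg HexB leB).
Notation isdegB' := (isdeg HexB' leB').

Lemma RA_RA' a x : RA a x -> RA' (f a) x.
Proof.
move=> Hx; have [H _] := rf_ring RF (f a); apply/(H x).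
exists [:: a], (fun _ => x); split; first by constructor; [by []|constructor].
by split; [move=> i [<-|[]]; split|rewrite big_seq1].
Qed.

Lemma NB_NB' b x : NB b x -> NB' (g b) x.
Proof.
move=> Hx; have [H _] := rg_mod RF (g b); apply/(H x).
exists [:: b], (fun _ => x); split; first by constructor; [by []|constructor].
by split; [move=> i [<-|[]]; split|rewrite big_seq1].
Qed.

Notation OA := (gp_action GP).
Notation OA' := (gp_action GP').
Notation HB5 := (NB0, NBD, NBN, HexB, HunB).

Lemma ISDEG v (d : cB) : isdegB v d -> isdegB' v (g d).
Proof.
move=> [Hd Hmax].
have COMP : forall b' : cB', prB' b' v = \sum_(b <- sv HexB v | (g b : cB') == b') prB b v.
  move=> b'; rewrite {1}(pr_sum HexB v).
  apply: (G3' NB0' NBD' NBN' HexB' HunB' (J := cB) (e := g) (c := fun b => prB b v)).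
  by move=> b _; apply: NB_NB'; apply: (pr_in NB0).
split.
  move=> E; apply: Hd.
  have : prB d (prB' (g d) v) = prB d v.
    rewrite COMP -big_filter (G3' NB0 NBD NBN HexB HunB (e := id) (c := fun b => prB b v)).
      rewrite big_filter_cond (pr_self NB0 NBD NBN HexB HunB d v); apply: eq_bigl => b /=.
      by case: (eqVneq b d) => [->|ne]; rewrite ?eqxx ?andbF.
    by move=> b _; apply: (pr_in NB0).
  by rewrite E (pr0 NB0 NBD NBN HexB HunB).
move=> b'; rewrite COMP => Hne; apply: NNPP => Hn; apply: Hne.
apply: big1 => b /eqP Hb; apply: NNPP => Hz; apply: Hn; rewrite -Hb.
by apply: (rg_mono RF); apply: Hmax.
Qed.

Lemma WF (P : cB -> Prop) :
  (forall D, (forall D', leB D' D -> D' <> D -> P D') -> P D) -> forall D, P D.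
Proof.
move=> H D; apply: NNPP => HD.
have [m [Hm Hmin]] := oa_wf OA (ex_intro (fun D => ~ P D) D HD).
apply: Hm; apply: H => D' H1 H2; apply: NNPP => HP; apply: H2.
by apply: (oa_antisym OA) => //; exact: Hmin.
Qed.

Lemma M_sum (J : Type) (s : seq J) (P : pred J) (F : J -> N) :
  (forall j, List.In j s -> P j -> M (F j)) -> M (\sum_(j <- s | P j) F j).
Proof.
case: HM => M0 [MD MS].
elim: s => [|j s IH] H; first by rewrite big_nil.
rewrite big_cons; case: ifP => Pj.
  by apply: MD; [apply: H => //; left | apply: IH => j' Hj; apply: H; right].
by apply: IH => j' Hj; apply: H; right.
Qed.

Definition good (D : cB) (t : R * N * A * cB) :=
  List.In t.1.1.2 X /\ RA t.1.2 t.1.1.1 /\ isdegB t.1.1.2 t.2 /\ leB (actB t.1.2 t.2) D.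

Lemma build (l0 : seq (R * N)) :
  (forall q, List.In q l0 -> exists x (d : cB), List.In x X /\ isdegB x d /\ q.2 = prB d x) ->
  exists l1 : seq (R * N * A * cB),
    (forall t, List.In t l1 -> List.In t.1.1.2 X /\ RA t.1.2 t.1.1.1 /\ isdegB t.1.1.2 t.2) /\
    \sum_(q <- l0) q.1 *: q.2 = \sum_(t <- l1) t.1.1.1 *: prB t.2 t.1.1.2.
Proof.
elim: l0 => [|[r u] l0 IH] H.
  by exists [::]; split => //; rewrite !big_nil.
have [l1 [H1 E1]] := IH (fun q Hq => H q (or_intror Hq)).
have [x [d [Hx [Hd Hu]]]] := H (r, u) (or_introl erefl); simpl in Hu.
have [s [c [_ [Hc Hr]]]] := proj1 ((rg_dsum (gp_ring GP)).1 r) Logic.I.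
exists (map (fun a => (c a, x, a, d)) s ++ l1); split.
  move=> t /In_cat [Ht|Ht]; last exact: H1.
  have [a [-> Ha]] := In_mapE Ht.
  by split => //; split => //; exact: (proj2 (Hc a Ha)).
by rewrite big_cons big_cat big_map /= E1 Hu Hr scaler_suml.
Qed.

Lemma SR : forall (D : cB) p, M p -> (forall b : cB, prB b p <> 0 -> leB b D) ->
  exists l, (forall t, List.In t l -> good D t) /\ p = \sum_(t <- l) t.1.1.1 *: t.1.1.2.
Proof.
apply: WF => D IH.
have case0 : forall p, M p -> (forall b : cB, prB b p <> 0 -> leB b D) -> prB D p = 0 ->
    exists l, (forall t, List.In t l -> good D t) /\ p = \sum_(t <- l) t.1.1.1 *: t.1.1.2.
  move=> p Mp Hb HD0.
  have [->|pn0] := eqVneq p 0.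
    by exists [::]; split => //; rewrite big_nil.
  have [D' [HD' Hmax]] := DEG HexB (oa_refl OA) (oa_trans OA) (oa_total OA) (elimN eqP pn0).
  have Hle : leB D' D := Hb D' HD'.
  have Hne : D' <> D by move=> E; apply: HD'; rewrite E.
  have [l [Hl Hp]] := IH D' Hle Hne p Mp Hmax.
  exists l; split => // t Ht; have [H1 [H2 [H3 H4]]] := Hl t Ht.
  by do 3 (split => //); apply: (oa_trans OA) H4 Hle.
move=> p Mp Hb.
case: (classic (prB D p = 0)) => HD0; first exact: case0.
have pn0 : p <> 0 by move=> E; apply: HD0; rewrite E (pr0 NB0 NBD NBN HexB HunB).
have Hdeg : isdegB p D by split.
have Hspan : span (fun u => exists x, List.In x X /\ leading_form leB NB x u) (prB D p).
  apply/HX2; apply: span_in; exists p; do 2 (split => //).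
  by apply/(LF NB0 NBD NBN HexB HunB); exists D; split.
have [l0 [Hl0 E0]] := Hspan.
have [l1 [Hl1 E1]] : exists l1 : seq (R * N * A * cB),
    (forall t, List.In t l1 -> List.In t.1.1.2 X /\ RA t.1.2 t.1.1.1 /\ isdegB t.1.1.2 t.2) /\
    \sum_(q <- l0) q.1 *: q.2 = \sum_(t <- l1) t.1.1.1 *: prB t.2 t.1.1.2.
  apply: build => q Hq; have [x [Hx Hlf]] := Hl0 q Hq.
  have [d [Hd Eq]] := proj1 (LF NB0 NBD NBN HexB HunB leB x q.2) Hlf.
  by exists x, d.
pose e := fun t : R * N * A * cB => actB t.1.2 t.2 : cB.
have Etop : prB D p = \sum_(t <- l1 | e t == D) t.1.1.1 *: prB t.2 t.1.1.2.
  have := G3' NB0 NBD NBN HexB HunB (s := l1) (e := e)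
    (c := fun t => t.1.1.1 *: prB t.2 t.1.1.2) _ D.
  rewrite -E1 -E0 (prpr NB0 NBD NBN HexB HunB) eqxx; apply.
  move=> t Ht; have [_ [Hh _]] := Hl1 t Ht.
  by apply: (mg_mul (gp_mod GP)) => //; apply: (pr_in NB0).
set q := \sum_(t <- l1 | e t == D) t.1.1.1 *: t.1.1.2.
have Mq : M q.
  apply: M_sum => t Ht _; have [Hx _] := Hl1 t Ht.
  by case: HM => _ [_ MS]; apply: MS; exact: (proj1 (HX1 Hx)).
have Mp' : M (p - q).
  case: HM => _ [MD MS]; apply: MD => //.
  by rewrite -scaleN1r; apply: MS.
have Hp'D : prB D (p - q) = 0.
  rewrite (prSub NB0 NBD NBN HexB HunB) (pr_sumL NB0 NBD NBN HexB HunB) Etop.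
  apply/eqP; rewrite subr_eq0; apply/eqP; apply: eq_big_In => t Ht /eqP Het.
  have [_ [Hh Hd]] := Hl1 t Ht.
  rewrite (SCALformal NB0 NBD NBN HunB (oa_antisym OA) (mg_mul (gp_mod GP))
    (oa_mono_r OA) (oa_cancel_r OA) Hh Hd); last by rewrite -Het; apply: (oa_refl OA).
  by rewrite -/(e t) Het eqxx.
have Hp'b : forall b : cB, prB b (p - q) <> 0 -> leB b D.
  move=> b; rewrite (prSub NB0 NBD NBN HexB HunB) (pr_sumL NB0 NBD NBN HexB HunB) => Hne.
  apply: NNPP => Hnle; apply: Hne.
  rewrite (_ : prB b p = 0) ?sub0r; last by apply: NNPP => Hz; apply: Hnle; apply: Hb.
  rewrite (eq_big_In (G := fun _ => 0)) ?big1 ?oppr0 // => t Ht /eqP Het.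
  apply: NNPP => Hz; apply: Hnle; rewrite -Het.
  have [_ [Hh Hd]] := Hl1 t Ht.
  exact: (SCALbound NB0 NBD NBN HunB (mg_mul (gp_mod GP)) (oa_mono_r OA) Hh Hd Hz).
have [l' [Hl' Hp']] := case0 (p - q) Mp' Hp'b Hp'D.
exists (l' ++ [seq t <- l1 | e t == D]); split.
  move=> t /In_cat [Ht|/In_filter [Ht Het]]; first exact: Hl'.
  have [H1 [H2 H3]] := Hl1 t Ht; do 3 (split => //).
  by rewrite -(eqP Het); apply: (oa_refl OA).
  by rewrite big_cat -Hp' big_filter /= -/q subrK.
Qed.

Lemma LFstep p u : M p -> p <> 0 -> leading_form leB' NB' p u ->
  span (fun u => exists x, List.In x X /\ leading_form leB' NB' x u) u.
Proof.
move=> Mp pn0 Hlf.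
have [D HD] := DEG HexB (oa_refl OA) (oa_trans OA) (oa_total OA) pn0.
have [l [Hl Hp]] := SR Mp (proj2 HD).
have HD' := ISDEG HD.
have [D' [HD'' ->]] := proj1 (LF NB0' NBD' NBN' HexB' HunB' leB' p u) Hlf.
rewrite (isdeg_uniq (I := cB') (oa_antisym OA') HD'' HD').
pose e' := fun t : R * N * A * cB => (actB' (f t.1.2) (g t.2) : cB').
have E : forall t, List.In t l -> true -> prB' (g D) (t.1.1.1 *: t.1.1.2) =
    (if e' t == g D then t.1.1.1 *: prB' (g t.2) t.1.1.2 else 0).
  move=> t Ht _; have [Hx [Hh [Hd Hle]]] := Hl t Ht.
  apply: (SCALformal NB0' NBD' NBN' HunB' (oa_antisym OA') (mg_mul (gp_mod GP'))
    (oa_mono_r OA') (oa_cancel_r OA') (RA_RA' Hh) (ISDEG Hd)).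
  by rewrite /= (rg_act RF); apply: (rg_mono RF) Hle.
rewrite Hp (pr_sumL NB0' NBD' NBN' HexB' HunB') (eq_big_In E) -big_mkcond.
exists [seq (t.1.1.1, prB' (g t.2) t.1.1.2) | t <- [seq t <- l | e' t == g D]]; split.
  move=> q Hq; have [t [-> /In_filter [Ht _]]] := In_mapE Hq.
  have [Hx [Hh [Hd Hle]]] := Hl t Ht.
  exists t.1.1.2; split => //; apply/(LF NB0' NBD' NBN' HexB' HunB').
  by exists (g t.2); split => //; exact: ISDEG.
by rewrite big_map big_filter.
Qed.

End Main.

Unset Implicit Arguments.

Theorem mainTheorem6 (k : fieldType) (R : comAlgType k) (N : lmodType R)
    (A : Type) (addA : A -> A -> A) (zA : A) (leA : A -> A -> Prop)
    (B : Type) (leB : B -> B -> Prop) (actB : A -> B -> B)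
    (RA : A -> R -> Prop) (NB : B -> N -> Prop)
    (A' : Type) (addA' : A' -> A' -> A') (zA' : A') (leA' : A' -> A' -> Prop)
    (B' : Type) (leB' : B' -> B' -> Prop) (actB' : A' -> B' -> B')
    (RA' : A' -> R -> Prop) (NB' : B' -> N -> Prop)
    (M : N -> Prop) (X : seq N) :
  noetherian_ring R ->
  noetherian_module N ->
  submodule M ->
  grading_pair addA zA leA leB actB RA NB ->
  grading_pair addA' zA' leA' leB' actB' RA' NB' ->
  (exists (f : A -> A') (g : B -> B'),
     refines addA zA leA leB actB RA NB addA' zA' leA' leB' actB' RA' NB' f g) ->
  macaulay_basis leB NB M X ->
  generates X M ->
  macaulay_basis leB' NB' M X.
Proof.
move=> _ _ HM GP GP' [f [g RF]] [HX1 HX2] _.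
split => // y; split; apply: span_trans => u.
- move=> [p [Mp [pn0 Hu]]]; exact: (LFstep HM GP GP' RF HX1 HX2 Mp pn0 Hu).
- move=> [x [Hx Hu]]; apply: span_in; have [Mx xn0] := HX1 x Hx; by exists x.
Qed.
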